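(* Let $A = \{g_n : n \in \mathbb{N}\} \subseteq \mathbb{N}^{\mathbb{N}}$ be an almost disjoint family of functions, let $E \subseteq \mathbb{N}\times\mathbb{N}$, and let $F = \{f_n : n \in \mathbb{N}\} \subseteq \mathbb{N}^{\mathbb{N}}$ be a family not finitely covered by $A$. Then there exists $g : \mathbb{N}\to\mathbb{N}$ that is almost disjoint from every function in $A$, such that $E$ is recursive in $g$, and such that for every $n$ the set $\{k : f_n(k) = g(k)\}$ is infinite.
   Context: Two functions $g_0,g_1\in\mathbb{N}^{\mathbb{N}}$ are almost disjoint if $\{n : g_0(n)=g_1(n)\}$ is finite; an almost disjoint family of functions is a family of pairwise almost disjoint functions. A function $f$ is finitely covered by $A$ if there are $h_0,\dots,h_m\in A$ with $\{k : f(k)\notin\{h_0(k),\dots,h_m(k)\}\}$ finite; $F$ is not finitely covered by $A$ if no member of $F$ is finitely covered by $A$. *)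

(* Defs.v *)
From Stdlib Require Import Arith List.
Import ListNotations.

Definition almost_disjoint (g0 g1 : nat -> nat) : Prop :=
  exists N, forall n, g0 n = g1 n -> n < N.

Definition ad_family (A : nat -> (nat -> nat)) : Prop :=
  forall i j, A i <> A j -> almost_disjoint (A i) (A j).

(* f is finitely covered by A: finitely many members h_0..h_m of A such that
   {k : f k not in {h_0 k, ..., h_m k}} is finite. *)
Definition finitely_covered (f : nat -> nat) (A : nat -> (nat -> nat)) : Prop :=
  exists (hs : list nat) (N : nat),
    forall k, N <= k -> exists i, In i hs /\ f k = A i k.

Definition not_finitely_covered (F A : nat -> (nat -> nat)) : Prop :=
  forall n, ~ finitely_covered (F n) A.

(* ---------- Relative computability: partial recursive functions with an
   oracle (Kleene's mu-recursive functions plus an oracle basic function). *)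
Inductive prf : Type :=
| PZero : prf
| PSucc : prf
| PProj : nat -> prf
| POracle : prf
| PComp : prf -> list prf -> prf
| PRec : prf -> prf -> prf
| PMu : prf -> prf.

Inductive eval (g : nat -> nat) : prf -> list nat -> nat -> Prop :=
| ev_zero : forall v, eval g PZero v 0
| ev_succ : forall x v, eval g PSucc (x :: v) (S x)
| ev_proj : forall i v, i < length v -> eval g (PProj i) v (nth i v 0)
| ev_oracle : forall x v, eval g POracle (x :: v) (g x)
| ev_comp : forall f hs v ys z,
    evals g hs v ys -> eval g f ys z -> eval g (PComp f hs) v z
| ev_rec0 : forall f h v z, eval g f v z -> eval g (PRec f h) (0 :: v) z
| ev_recS : forall f h n v y z,
    eval g (PRec f h) (n :: v) y -> eval g h (n :: y :: v) z ->
    eval g (PRec f h) (S n :: v) z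
| ev_mu : forall f v n,
    eval g f (n :: v) 0 ->
    (forall m, m < n -> exists y, eval g f (m :: v) (S y)) ->
    eval g (PMu f) v n
with evals (g : nat -> nat) : list prf -> list nat -> list nat -> Prop :=
| evs_nil : forall v, evals g [] v []
| evs_cons : forall h hs v y ys,
    eval g h v y -> evals g hs v ys -> evals g (h :: hs) v (y :: ys).

Definition recursive_in (E : nat -> nat -> Prop) (g : nat -> nat) : Prop :=
  exists p : prf, forall a b,
    (E a b -> eval g p [a; b] 1) /\ (~ E a b -> eval g p [a; b] 0).

(* Main.v *)
Require Import Defs.
From Stdlib Require Import Arith List Lia Classical ClassicalEpsilon.
Import ListNotations.

Fixpoint T n := match n with 0 => 0 | S m => T m + S m end.
Definition cpair a b := T (a+b) + b.

Lemma T_lt : forall m n, n < m -> T n + n < T m.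
Proof.
  induction m; intros n H; [lia|]. simpl.
  destruct (Nat.eq_dec n m) as [->|Hn]; [lia|].
  specialize (IHm n ltac:(lia)); lia.
Qed.

Lemma cpair_inj : forall a b a' b', cpair a b = cpair a' b' -> a = a' /\ b = b'.
Proof.
  unfold cpair; intros a b a' b' H.
  destruct (Nat.lt_total (a+b) (a'+b')) as [Hl|[He|Hl]].
  - pose proof (T_lt _ _ Hl); lia.
  - rewrite He in H; lia.
  - pose proof (T_lt _ _ Hl); lia.
Qed.

Lemma cpair_ge : forall a b, b <= cpair a b.
Proof. unfold cpair; lia. Qed.

Definition sched s := epsilon (inhabits 0) (fun n => exists b, cpair n b = s).

Lemma sched_pair : forall n b, sched (cpair n b) = n.
Proof.
  intros n b. unfold sched.
  destruct (epsilon_spec (inhabits 0) (fun n0 => exists b0, cpair n0 b0 = cpair n b)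
    (ex_intro _ n (ex_intro _ b eq_refl))) as [b' Hb].
  apply cpair_inj in Hb; tauto.
Qed.

Fixpoint sumA (A : nat -> nat -> nat) n x :=
  match n with 0 => A 0 x | S m => sumA A m x + A (S m) x end.

Lemma sumA_ge : forall A n i x, i <= n -> A i x <= sumA A n x.
Proof.
  induction n; intros i x H; simpl.
  - assert (i = 0) by lia; subst; lia.
  - destruct (Nat.eq_dec i (S n)) as [->|]; [lia|].
    specialize (IHn i x ltac:(lia)); lia.
Qed.

Definition meet (A F : nat -> nat -> nat) s c :=
  epsilon (inhabits 0) (fun k => c < k /\ forall i, i <= s -> F (sched s) k <> A i k).

Lemma meet_spec : forall A F s c, not_finitely_covered F A ->
  c < meet A F s c /\ forall i, i <= s -> F (sched s) (meet A F s c) <> A i (meet A F s c).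
Proof.
  intros A F s c Hnfc. unfold meet. apply epsilon_spec.
  destruct (classic (exists k, c < k /\ forall i, i <= s -> F (sched s) k <> A i k))
    as [H|H]; [exact H|].
  exfalso; apply (Hnfc (sched s)). exists (seq 0 (S s)), (S c). intros k Hk.
  destruct (classic (exists i, In i (seq 0 (S s)) /\ F (sched s) k = A i k)) as [H'|Hn];
    [exact H'|].
  exfalso; apply H; exists k; split; [lia|]. intros i Hi Heq; apply Hn; exists i;
  split; [apply in_seq; lia|exact Heq].
Qed.

Definition bit (E : nat -> nat -> Prop) s :=
  if excluded_middle_informative (exists a b, cpair a b = s /\ E a b) then 1 else 0.

Definition code A E s c m := 2 * (m + c + sumA A s c + 1) + bit E s.

Fixpoint PP A F E s : nat * nat :=
  match s with
  | 0 => (0, meet A F 0 0)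
  | S s' => let (c, m) := PP A F E s' in
            let c' := code A E s' c m in (c', meet A F (S s') c')
  end.

Definition cpos A F E s := fst (PP A F E s).
Definition mpos A F E s := snd (PP A F E s).

Lemma cpos0 : forall A F E, cpos A F E 0 = 0.
Proof. reflexivity. Qed.

Lemma mpos_eq : forall A F E s, mpos A F E s = meet A F s (cpos A F E s).
Proof.
  intros; unfold mpos, cpos; destruct s; simpl; [reflexivity|].
  destruct (PP A F E s); reflexivity.
Qed.

Lemma cposS : forall A F E s, cpos A F E (S s) = code A E s (cpos A F E s) (mpos A F E s).
Proof.
  intros; unfold mpos, cpos; simpl. destruct (PP A F E s); reflexivity.
Qed.


Fixpoint parf n := match n with 0 => 0 | S m => match parf m with 0 => 1 | _ => 0 end end.

Lemma parf01 : forall n, parf n = 0 \/ parf n = 1.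
Proof. induction n; simpl; [auto|]. destruct (parf n); auto. Qed.

Lemma parf_code : forall M b, b <= 1 -> parf (2 * M + b) = b.
Proof.
  induction M; intros b Hb.
  - destruct b as [|[|]]; simpl; auto; lia.
  - replace (2 * S M + b) with (S (S (2 * M + b))) by lia. simpl.
    rewrite IHM by exact Hb. destruct b as [|[|]]; simpl; auto; lia.
Qed.

Lemma bit_le : forall E s, bit E s <= 1.
Proof. intros; unfold bit; destruct excluded_middle_informative; lia. Qed.

Definition gdef A F E k :=
  match excluded_middle_informative (exists s, cpos A F E s = k) with
  | left _ => cpos A F E (S (epsilon (inhabits 0) (fun s => cpos A F E s = k)))
  | right _ =>
    match excluded_middle_informative (exists s, mpos A F E s = k) with
    | left _ => F (sched (epsilon (inhabits 0) (fun s => mpos A F E s = k))) k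
    | right _ => S (sumA A k k)
    end
  end.


Lemma cm_lt : forall A F E s, not_finitely_covered F A ->
  cpos A F E s < mpos A F E s /\ mpos A F E s < cpos A F E (S s).
Proof.
  intros A F E s H. rewrite mpos_eq. split.
  - apply (meet_spec A F s), H.
  - rewrite cposS, mpos_eq. unfold code. lia.
Qed.

Lemma c_mono : forall A F E s t, not_finitely_covered F A -> s < t ->
  mpos A F E s < cpos A F E t.
Proof.
  intros A F E s t H Hst. induction t; [lia|].
  destruct (Nat.eq_dec s t) as [->|].
  - apply cm_lt, H.
  - pose proof (cm_lt A F E t H). specialize (IHt ltac:(lia)); lia.
Qed.

Lemma c_mono2 : forall A F E s t, not_finitely_covered F A -> s < t ->
  cpos A F E s < cpos A F E t.
Proof.
  intros. pose proof (cm_lt A F E s H). pose proof (c_mono A F E s t H H0). lia.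
Qed.

Lemma cpos_ge : forall A F E s, not_finitely_covered F A -> s <= cpos A F E s.
Proof.
  intros A F E s H; induction s; [lia|].
  pose proof (c_mono2 A F E s (S s) H ltac:(lia)); lia.
Qed.

Lemma c_ne_m : forall A F E s t, not_finitely_covered F A -> cpos A F E s <> mpos A F E t.
Proof.
  intros A F E s t H.
  destruct (le_lt_dec s t).
  - destruct (Nat.eq_dec s t) as [->|].
    + pose proof (cm_lt A F E t H); lia.
    + pose proof (c_mono2 A F E s t H ltac:(lia)); pose proof (cm_lt A F E t H); lia.
  - pose proof (c_mono A F E t s H l); lia.
Qed.

Lemma c_inj : forall A F E s t, not_finitely_covered F A -> cpos A F E s = cpos A F E t -> s = t.
Proof.
  intros A F E s t H He. destruct (Nat.lt_total s t) as [h|[h|h]]; auto.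
  - pose proof (c_mono2 A F E s t H h); lia.
  - pose proof (c_mono2 A F E t s H h); lia.
Qed.

Lemma m_inj : forall A F E s t, not_finitely_covered F A -> mpos A F E s = mpos A F E t -> s = t.
Proof.
  intros A F E s t H He. destruct (Nat.lt_total s t) as [h|[h|h]]; auto.
  - pose proof (c_mono A F E s t H h); pose proof (cm_lt A F E t H); lia.
  - pose proof (c_mono A F E t s H h); pose proof (cm_lt A F E s H); lia.
Qed.

Lemma g_c : forall A F E s, not_finitely_covered F A ->
  gdef A F E (cpos A F E s) = cpos A F E (S s).
Proof.
  intros A F E s H. unfold gdef.
  destruct excluded_middle_informative as [h|h].
  - pose proof (epsilon_spec (inhabits 0) (fun s0 => cpos A F E s0 = cpos A F E s) h) as e.
    apply c_inj in e; [|exact H]. rewrite e; reflexivity.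
  - exfalso; apply h; eauto.
Qed.

Lemma g_m : forall A F E s, not_finitely_covered F A ->
  gdef A F E (mpos A F E s) = F (sched s) (mpos A F E s).
Proof.
  intros A F E s H. unfold gdef.
  destruct excluded_middle_informative as [h|h].
  - exfalso. destruct h as [t ht]. eapply c_ne_m; eauto.
  - destruct excluded_middle_informative as [h2|h2].
    + pose proof (epsilon_spec (inhabits 0) (fun s0 => mpos A F E s0 = mpos A F E s) h2) as e.
      apply m_inj in e; [|exact H]. rewrite e; reflexivity.
    + exfalso; apply h2; eauto.
Qed.

Lemma g_other : forall A F E k,
  ~ (exists s, cpos A F E s = k) -> ~ (exists s, mpos A F E s = k) ->
  gdef A F E k = S (sumA A k k).
Proof.
  intros A F E k h1 h2. unfold gdef.
  destruct excluded_middle_informative; [contradiction|].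
  destruct excluded_middle_informative; [contradiction|]. reflexivity.
Qed.

Definition addp := PRec (PProj 0) (PComp PSucc [PProj 1]).
Definition Tp := PRec PZero (PComp addp [PProj 1; PComp PSucc [PProj 0]]).
Definition pairp := PComp addp [PComp Tp [PComp addp [PProj 0; PProj 1]]; PProj 1].
Definition iterp := PRec PZero (PComp POracle [PProj 1]).
Definition notzp := PRec (PComp PSucc [PZero]) PZero.
Definition parp := PRec PZero (PComp notzp [PProj 1]).
Definition mainp := PComp parp [PComp iterp [PComp PSucc [pairp]]].

Fixpoint itg (g : nat -> nat) n := match n with 0 => 0 | S m => g (itg g m) end.

Ltac proj := match goal with |- eval ?g (PProj ?i) ?v _ =>
  apply (ev_proj g i v); simpl; lia end.

Lemma ev_add : forall g x y, eval g addp [x; y] (x + y).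
Proof.
  intros g x y. induction x.
  - constructor. proj.
  - simpl. eapply ev_recS; [exact IHx|].
    eapply ev_comp; [constructor; [proj|constructor]|constructor].
Qed.

Lemma ev_T : forall g n, eval g Tp [n] (T n).
Proof.
  intros g n. induction n.
  - constructor. constructor.
  - simpl. eapply ev_recS; [exact IHn|].
    eapply ev_comp; [|apply ev_add].
    constructor; [proj|]. constructor; [|constructor].
    eapply ev_comp; [constructor; [proj|constructor]|constructor].
Qed.

Lemma ev_pair : forall g a b, eval g pairp [a; b] (cpair a b).
Proof.
  intros. unfold pairp, cpair. eapply ev_comp; [|apply ev_add].
  constructor; [|constructor; [proj|constructor]].
  eapply ev_comp; [|apply ev_T]. constructor; [|constructor].
  eapply ev_comp; [|apply ev_add]. constructor; [proj|constructor; [proj|constructor]].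
Qed.

Lemma ev_iter : forall g n, eval g iterp [n] (itg g n).
Proof.
  intros g n. induction n.
  - constructor. constructor.
  - simpl. eapply ev_recS; [exact IHn|].
    eapply ev_comp; [constructor; [proj|constructor]|constructor].
Qed.

Lemma ev_notz_ex : forall g y, exists r, eval g notzp [y] r.
Proof.
  intros g y. induction y.
  - eexists. constructor. eapply ev_comp; [constructor; [constructor|constructor]|constructor].
  - destruct IHy as [r Hr]. eexists. eapply ev_recS; [exact Hr|constructor].
Qed.

Lemma ev_notz : forall g y, eval g notzp [y] (match y with 0 => 1 | _ => 0 end).
Proof.
  intros g y. destruct y.
  - constructor. eapply ev_comp; [constructor; [constructor|constructor]|constructor].
  - destruct (ev_notz_ex g y) as [r Hr]. eapply ev_recS; [exact Hr|constructor].
Qed.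

Lemma ev_par : forall g n, eval g parp [n] (parf n).
Proof.
  intros g n. induction n.
  - constructor. constructor.
  - simpl. eapply ev_recS; [exact IHn|].
    eapply ev_comp; [constructor; [proj|constructor]|apply ev_notz].
Qed.

Lemma ev_main : forall g a b, eval g mainp [a; b] (parf (itg g (S (cpair a b)))).
Proof.
  intros. unfold mainp. eapply ev_comp; [|apply ev_par].
  constructor; [|constructor].
  eapply ev_comp; [|apply ev_iter]. constructor; [|constructor].
  eapply ev_comp; [constructor; [apply ev_pair|constructor]|constructor].
Qed.

Theorem mainTheorem7 (A : nat -> (nat -> nat)) (E : nat -> nat -> Prop)
    (F : nat -> (nat -> nat)) :
  ad_family A ->
  not_finitely_covered F A ->
  exists g : nat -> nat,
    (forall n, almost_disjoint g (A n)) /\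
    recursive_in E g /\
    (forall n, forall N, exists k, N <= k /\ F n k = g k).
Proof.
  intros _ H. exists (gdef A F E). split; [|split].
  - intros m. exists (cpos A F E m + m). intros k Hk.
    destruct (classic (exists s, cpos A F E s = k)) as [[s <-]|h1].
    + rewrite g_c in Hk by exact H.
      destruct (le_lt_dec m s).
      * exfalso. rewrite cposS in Hk. unfold code in Hk.
        pose proof (sumA_ge A s m (cpos A F E s) l). lia.
      * pose proof (c_mono2 A F E s m H l); lia.
    + destruct (classic (exists s, mpos A F E s = k)) as [[s <-]|h2].
      * rewrite g_m in Hk by exact H.
        destruct (le_lt_dec m s).
        -- exfalso. rewrite mpos_eq in Hk.
           apply (proj2 (meet_spec A F s _ H) m l Hk).
        -- pose proof (c_mono A F E s m H l); lia.
      * rewrite g_other in Hk by assumption.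
        destruct (le_lt_dec m k); [|lia].
        pose proof (sumA_ge A k m k l); lia.
  - exists mainp. intros a b.
    assert (Hit : forall n, itg (gdef A F E) n = cpos A F E n).
    { induction n; [reflexivity|]. simpl. rewrite IHn. apply g_c, H. }
    assert (Hb : parf (itg (gdef A F E) (S (cpair a b))) = bit E (cpair a b)).
    { rewrite Hit, cposS. unfold code. apply parf_code, bit_le. }
    split; intro He; pose proof (ev_main (gdef A F E) a b) as Hm; rewrite Hb in Hm;
      unfold bit in Hm; destruct excluded_middle_informative as [h|h]; auto.
    + exfalso; apply h; eauto.
    + exfalso. destruct h as [a' [b' [Hp He']]]. apply cpair_inj in Hp.
      destruct Hp; subst; contradiction.
  - intros n N. exists (mpos A F E (cpair n N)). split.
    + pose proof (cpair_ge n N). pose proof (cpos_ge A F E (cpair n N) H).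
      pose proof (cm_lt A F E (cpair n N) H). lia.
    + rewrite g_m by exact H. rewrite sched_pair. reflexivity.
Qed.
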